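(* For all $(n,k),(p,q)\in\mathcal{I}$, $\Delta_{p,q}(\psi_{n,k})=\delta^{n,k}_{p,q}\,I_d$, where $\delta^{n,k}_{p,q}$ equals $1$ if $(n,k)=(p,q)$ and $0$ otherwise. That is, the generalized functions $\delta_{p,q}$ form a dual family to the functions $\psi_{n,k}$.
   Context: Let $d,m\geq 1$. Let $\alpha:[0,1]\to\mathbb{R}^{d\times d}$, $\sqrt{\Gamma}:[0,1]\to\mathbb{R}^{d\times m}$ be continuous, $\Gamma=\sqrt{\Gamma}\sqrt{\Gamma}^{T}$. Let $F(s,t)$ be the flow ($\partial_tF(s,t)=\alpha(t)F(s,t)$, $F(s,s)=I_d$), $h_u(s,t)=\int_s^t F(w,u)\Gamma(w)F(w,u)^Tdw$, $h=h_0$, $g(t)=F(0,t)$. Non-degeneracy: $F(u,v)h_u(u,v)F(u,v)^T$ is positive definite for all $0\le u<v\le1$. $\mathcal{I}=\{(0,0)\}\cup\{(n,k):n\ge1,\ 0\le k<2^{n-1}\}$. Partition: fix $\rho\in(0,1)$ and reals $l_{n,k}<m_{n,k}<r_{n,k}$ ($n\ge1$) with $l_{1,0}=0$, $r_{1,0}=1$, $l_{n+1,2k}=l_{n,k}$, $r_{n+1,2k}=l_{n+1,2k+1}=m_{n,k}$, $r_{n+1,2k+1}=r_{n,k}$, $\max(r_{n,k}-m_{n,k},m_{n,k}-l_{n,k})<\rho(r_{n,k}-l_{n,k})$. For $n\ge1$ (writing $l,m,r$ for $l_{n,k},m_{n,k},r_{n,k}$): $\Sigma_{n,k}=h_m(l,m)h_m(l,r)^{-1}h_m(m,r)$,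 $\sigma_{n,k}$ its lower-triangular Cholesky factor with positive diagonal, $L_{n,k}=h(l,m)^{-1}g(m)^{-1}\sigma_{n,k}$, $R_{n,k}=h(m,r)^{-1}g(m)^{-1}\sigma_{n,k}$, $M_{n,k}=g(m)^T(\sigma_{n,k}^{-1})^T$, and $\psi_{n,k}(t)=g(t)h(l,t)L_{n,k}$ on $[l,m]$, $g(t)h(t,r)R_{n,k}$ on $[m,r]$, $0$ elsewhere. Also $\sigma_{0,0}$ is the lower-triangular Cholesky factor of $g(1)h(0,1)g(1)^T$, $L_{0,0}=h(0,1)^{-1}g(1)^{-1}\sigma_{0,0}$, $\psi_{0,0}(t)=g(t)h(0,t)L_{0,0}$. Dual family: $\delta_{n,k}$ is the $\mathbb{R}^{d\times d}$-valued combination of Dirac masses $\delta_{n,k}(t)=(g(t)^{-1})^T\big(M_{n,k}\delta(t-m)-L_{n,k}\delta(t-l)-R_{n,k}\delta(t-r)\big)$ for $n\ge1$, and $\delta_{0,0}(t)=(g(t)^{-1})^TL_{0,0}\delta(t-1)$. Its pairing with a continuous matrix-valued function $x$ on $[0,1]$ is $\Delta_{n,k}(x)=\int\delta_{n,k}(t)^Tx(t)\,dt$, i.e. $\Delta_{n,k}(x)=M_{n,k}^Tg(m)^{-1}x(m)-L_{n,k}^Tg(l)^{-1}x(l)-R_{n,k}^Tg(r)^{-1}x(r)$ for $n\ge1$ and $\Delta_{0,0}(x)=L_{0,0}^Tg(1)^{-1}x(1)$. *)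

(* Defs.v *)
From HB Require Import structures.
From mathcomp Require Import all_boot all_order all_algebra.
From mathcomp Require Import all_classical all_reals all_analysis.
Set Implicit Arguments. Unset Strict Implicit. Unset Printing Implicit Defensive.
Import Order.TTheory GRing.Theory Num.Theory.
Import numFieldNormedType.Exports.
Local Open Scope classical_set_scope.
Local Open Scope ring_scope.

Definition mx_integral (R : realType) (p q : nat) (f : R -> 'M[R]_(p, q)) (a b : R)
  : 'M[R]_(p, q) :=
  \matrix_(i, j) Rintegral (@lebesgue_measure R) `[a, b] (fun w => f w i j).

Definition Gam (R : realType) (d m : nat) (sG : R -> 'M[R]_(d, m)) (w : R) : 'M[R]_d :=
  sG w *m (sG w)^T.

Definition hu (R : realType) (d m : nat) (F : R -> R -> 'M[R]_d)
  (sG : R -> 'M[R]_(d, m)) (u s t : R) : 'M[R]_d :=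
  mx_integral (fun w => F w u *m Gam sG w *m (F w u)^T) s t.

Definition h0 (R : realType) (d m : nat) (F : R -> R -> 'M[R]_d)
  (sG : R -> 'M[R]_(d, m)) (s t : R) : 'M[R]_d := hu F sG 0 s t.

Definition gfl (R : realType) (d : nat) (F : R -> R -> 'M[R]_d) (t : R) : 'M[R]_d :=
  F 0 t.

Definition posdef (R : realType) (d : nat) (A : 'M[R]_d) : Prop :=
  forall v : 'cV[R]_d, v != 0 -> 0 < (v^T *m A *m v) 0 0.

Definition is_cholesky (R : realType) (d : nat) (S sig : 'M[R]_d) : Prop :=
  [/\ forall i j : 'I_d, (i < j)%N -> sig i j = 0,
      forall i : 'I_d, 0 < sig i i
    & sig *m sig^T = S].

Definition Sigma (R : realType) (d m : nat) (F : R -> R -> 'M[R]_d)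
  (sG : R -> 'M[R]_(d, m)) (l mid r : R) : 'M[R]_d :=
  hu F sG mid l mid *m invmx (hu F sG mid l r) *m hu F sG mid mid r.

Definition Lmat (R : realType) (d m : nat) (F : R -> R -> 'M[R]_d)
  (sG : R -> 'M[R]_(d, m)) (sig : 'M[R]_d) (l mid : R) : 'M[R]_d :=
  invmx (h0 F sG l mid) *m invmx (gfl F mid) *m sig.
Definition Rmat (R : realType) (d m : nat) (F : R -> R -> 'M[R]_d)
  (sG : R -> 'M[R]_(d, m)) (sig : 'M[R]_d) (mid r : R) : 'M[R]_d :=
  invmx (h0 F sG mid r) *m invmx (gfl F mid) *m sig.
Definition Mmat (R : realType) (d : nat) (F : R -> R -> 'M[R]_d)
  (sig : 'M[R]_d) (mid : R) : 'M[R]_d :=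
  (gfl F mid)^T *m (invmx sig)^T.

Definition L00 (R : realType) (d m : nat) (F : R -> R -> 'M[R]_d)
  (sG : R -> 'M[R]_(d, m)) (sig0 : 'M[R]_d) : 'M[R]_d :=
  invmx (h0 F sG 0 1) *m invmx (gfl F 1) *m sig0.

Definition psi_nk (R : realType) (d m : nat) (F : R -> R -> 'M[R]_d)
  (sG : R -> 'M[R]_(d, m)) (sig : 'M[R]_d) (l mid r : R) (t : R) : 'M[R]_d :=
  if (l <= t) && (t <= mid) then gfl F t *m h0 F sG l t *m Lmat F sG sig l mid
  else if (mid <= t) && (t <= r) then gfl F t *m h0 F sG t r *m Rmat F sG sig mid r
  else 0.

Definition psi_00 (R : realType) (d m : nat) (F : R -> R -> 'M[R]_d)
  (sG : R -> 'M[R]_(d, m)) (sig0 : 'M[R]_d) (t : R) : 'M[R]_d :=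
  gfl F t *m h0 F sG 0 t *m L00 F sG sig0.

Definition inI (n k : nat) : bool :=
  ((n == 0) && (k == 0))%N || ((0 < n) && (k < 2 ^ n.-1))%N.

Definition psi (R : realType) (d m : nat) (F : R -> R -> 'M[R]_d)
  (sG : R -> 'M[R]_(d, m)) (sigma : nat -> nat -> 'M[R]_d)
  (lp mp rp : nat -> nat -> R) (n k : nat) (t : R) : 'M[R]_d :=
  if n == 0%N then psi_00 F sG (sigma 0%N 0%N) t
  else psi_nk F sG (sigma n k) (lp n k) (mp n k) (rp n k) t.

(* Pairing Delta_{p,q}(x) of the dual generalized function delta_{p,q} with x *)
Definition Delta (R : realType) (d m : nat) (F : R -> R -> 'M[R]_d)
  (sG : R -> 'M[R]_(d, m)) (sigma : nat -> nat -> 'M[R]_d)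
  (lp mp rp : nat -> nat -> R) (p q : nat) (x : R -> 'M[R]_d) : 'M[R]_d :=
  if p == 0%N then
    (L00 F sG (sigma 0%N 0%N))^T *m invmx (gfl F 1) *m x 1
  else
    let l := lp p q in let mid := mp p q in let r := rp p q in
    let sig := sigma p q in
    (Mmat F sig mid)^T *m invmx (gfl F mid) *m x mid
    - (Lmat F sG sig l mid)^T *m invmx (gfl F l) *m x l
    - (Rmat F sG sig mid r)^T *m invmx (gfl F r) *m x r.

Definition I01 (R : realType) : set R := `[0, 1].

(* Main.v *)
Require Import Defs.
From HB Require Import structures.
From mathcomp Require Import all_boot all_order all_algebra.
From mathcomp Require Import all_classical all_reals all_analysis.
From mathcomp Require Import perm zify.
Import Order.TTheory GRing.Theory Num.Theory.
Import numFieldNormedType.Exports.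
Local Open Scope classical_set_scope.
Local Open Scope ring_scope.
Set Implicit Arguments. Unset Strict Implicit. Unset Printing Implicit Defensive.
Set Implicit Arguments. Unset Strict Implicit. Unset Printing Implicit Defensive.
Section Comb.
Variable R : realType.
Variables lp mp rp : nat -> nat -> R.
Hypothesis H10 : lp 1%N 0%N = 0.
Hypothesis H11 : rp 1%N 0%N = 1.
Hypothesis Hn : forall n k, (0 < n)%N -> (k < 2 ^ n.-1)%N ->
     [/\ lp n.+1 k.*2 = lp n k, rp n.+1 k.*2 = mp n k,
         lp n.+1 k.*2.+1 = mp n k & rp n.+1 k.*2.+1 = rp n k].
Hypothesis Ho : forall n k, (0 < n)%N -> (k < 2 ^ n.-1)%N ->
     lp n k < mp n k /\ mp n k < rp n k.

Definition vld n k := ((0 < n) && (k < 2 ^ n.-1))%N.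

Lemma vld_par n k : vld n.+1 k -> (0 < n)%N -> vld n k./2.
Proof.
move=> /andP[_ hk] n0; rewrite /vld n0 /=.
case: n n0 hk => // n _ hk; rewrite -ltn_double -!muln2 -expnSr.
move: hk; rewrite -[k in (k < _)%N -> _](odd_double_half k) => hk.
rewrite muln2; by case: (odd k) hk => /=; lia.
Qed.

Lemma child n k : vld n.+1 k -> (0 < n)%N ->
  lp n.+1 k = (if odd k then mp n k./2 else lp n k./2) /\
  rp n.+1 k = (if odd k then rp n k./2 else mp n k./2).
Proof.
move=> hv n0; have /andP[_ hk] := vld_par hv n0.
have [a b c e] := Hn n0 hk.
have ek := odd_double_half k.
case ok: (odd k) ek => /= ek.
  split; [rewrite -c|rewrite -e]; congr (_ _ _); move: ek; set z := k./2; lia.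
split; [rewrite -a|rewrite -b]; congr (_ _ _); move: ek; set z := k./2; lia.
Qed.

Lemma vld_ord n k : vld n k -> lp n k < mp n k /\ mp n k < rp n k.
Proof. by move=> /andP[a b]; apply: Ho. Qed.

Lemma vld_lr n k : vld n k -> lp n k < rp n k.
Proof. by move=> /vld_ord[a b]; apply: lt_trans b. Qed.

Lemma child_in n k : vld n.+1 k -> (0 < n)%N ->
  lp n k./2 <= lp n.+1 k /\ rp n.+1 k <= rp n k./2.
Proof.
move=> hv n0; have [a b] := vld_ord (vld_par hv n0).
have [-> ->] := child hv n0; case: (odd k); split; by rewrite ?lexx ?ltW.
Qed.

Lemma vld_anc j n k : vld (n + j) k -> (0 < n)%N -> vld n (k %/ 2 ^ j).
Proof.
elim: j k => [|j IH] k; first by rewrite addn0 expn0 divn1.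
move=> hv n0; rewrite addnS in hv.
have := vld_par hv (ltn_addr _ n0) => /IH /(_ n0).
by rewrite -divn2 -divnMA -expnS.
Qed.

Lemma anc j n k : vld (n + j) k -> (0 < n)%N ->
  [/\ lp n (k %/ 2 ^ j) <= lp (n + j) k, rp (n + j) k <= rp n (k %/ 2 ^ j)
    & (0 < j)%N -> rp (n + j) k <= mp n (k %/ 2 ^ j) \/ mp n (k %/ 2 ^ j) <= lp (n + j) k].
Proof.
elim: j k => [|j IH] k.
  by rewrite addn0 expn0 divn1 => _ _; split.
move=> hv n0; rewrite addnS in hv *.
have n0' : (0 < n + j)%N by apply: ltn_addr.
have hp := vld_par hv n0'.
have [c1 c2] := child_in hv n0'.
have [i1 i2 i3] := IH _ hp n0.
have E : (k./2 %/ 2 ^ j = k %/ 2 ^ j.+1)%N by rewrite -divn2 -divnMA -expnS.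
rewrite E in i1 i2 i3.
split; first exact: le_trans i1 c1.
  exact: le_trans c2 i2.
move=> _; case: j IH hv n0' hp i1 i2 i3 E c1 c2 => [|j] IH hv n0' hp i1 i2 i3 E c1 c2.
  rewrite addn0 in hv hp c1 c2 *; rewrite expn1 divn2.
  have [-> ->] := child hv n0.
  by case: (odd k); [right|left].
case: (i3 erefl) => h; [left|right].
  exact: le_trans c2 h.
exact: le_trans h c1.
Qed.

Lemma same_lvl n a b : vld n a -> vld n b -> (a < b)%N -> rp n a <= lp n b.
Proof.
elim: n a b => [|n IH] a b; first by rewrite /vld.
case: n IH => [|n] IH.
  by move=> /andP[_ ha] /andP[_ hb]; move: ha hb; rewrite /= expn0; lia.
move=> ha hb ab.
have [ca1 ca2] := child ha erefl; have [cb1 cb2] := child hb erefl.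
have hpa := vld_par ha erefl; have hpb := vld_par hb erefl.
have : (a./2 <= b./2)%N by rewrite -!divn2 leq_div2r // ltnW.
rewrite leq_eqVlt => /orP[/eqP e|lt].
  have oa : ~~ odd a.
    apply/negP=> oa; move: ab; rewrite -(odd_double_half a) -(odd_double_half b) e oa.
    by case: (odd b) => /=; lia.
  have ob : odd b.
    apply/negPn/negP=> ob; move: ab; rewrite -(odd_double_half a) -(odd_double_half b) e.
    by rewrite (negbTE oa) (negbTE ob) /= ltnn.
  by rewrite ca2 cb1 (negbTE oa) ob e.
have [ia1 ia2] := child_in ha erefl; have [ib1 ib2] := child_in hb erefl.
apply: le_trans ia2 _; apply: le_trans _ ib1; exact: IH.
Qed.

Lemma vld_01 n k : vld n k -> 0 <= lp n k /\ rp n k <= 1.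
Proof.
move=> hv; have n0 : (0 < n)%N by case/andP: hv.
have e : n = (1 + n.-1)%N by rewrite add1n prednK.
rewrite e in hv *; have [i1 i2 _] := anc hv erefl.
have : (k %/ 2 ^ n.-1 = 0)%N.
  by apply/divn_small; case/andP: hv; rewrite -e.
move=> z; rewrite z H10 H11 in i1 i2; by split.
Qed.

Lemma classify n k p q : vld n k -> vld p q -> (n != p) || (k != q) ->
  [\/ lp n k <= lp p q /\ rp p q <= mp n k,
      mp n k <= lp p q /\ rp p q <= rp n k |
      [/\ lp p q <= lp n k \/ rp n k <= lp p q,
          mp p q <= lp n k \/ rp n k <= mp p q &
          rp p q <= lp n k \/ rp n k <= rp p q]].
Proof.
move=> hk hq ne.
have n0 : (0 < n)%N by case/andP: hk.
have p0 : (0 < p)%N by case/andP: hq.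
have [oq1 oq2] := vld_ord hq; have [ok1 ok2] := vld_ord hk.
case: (leqP n p) => np.
- have e : p = (n + (p - n))%N by rewrite subnKC.
  move: hq oq1 oq2; rewrite e => hq oq1 oq2.
  have [i1 i2 i3] := anc hq n0.
  have ha := vld_anc hq n0.
  have [ak|ak] := eqVneq (q %/ 2 ^ (p - n))%N k.
    have j0 : (0 < p - n)%N.
      rewrite lt0n; apply/negP => /eqP j0.
      have pn : p = n by lia.
      by move: ak ne; rewrite j0 expn0 divn1 pn eqxx => ->; rewrite eqxx.
    rewrite ak in i1 i2 i3; case: (i3 j0) => h.
      by apply: Or31; split.
    by apply: Or32; split.
  apply: Or33.
  case: (ltngtP (q %/ 2 ^ (p - n))%N k) ak => // lt _.
    have := same_lvl ha hk lt => s.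
    have r1 : rp (n + (p - n)) q <= lp n k by apply: le_trans i2 s.
    split; left => //; apply: ltW.
      by apply: lt_le_trans r1; apply: lt_trans oq2.
    by apply: lt_le_trans r1.
  have := same_lvl hk ha lt => s.
  have r1 : rp n k <= lp (n + (p - n)) q by apply: le_trans s i1.
  split; right => //; apply: ltW.
    by apply: le_lt_trans r1 _.
  by apply: le_lt_trans r1 (lt_trans oq1 oq2).
- have e : n = (p + (n - p))%N by rewrite subnKC // ltnW.
  move: hk ok1 ok2; rewrite e => hk ok1 ok2.
  have [i1 i2 i3] := anc hk p0.
  have ha := vld_anc hk p0.
  apply: Or33.
  have [ak|ak] := eqVneq (k %/ 2 ^ (n - p))%N q.
    rewrite ak in i1 i2 i3; have j0 : (0 < n - p)%N by rewrite subn_gt0.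
    split; [by left|case: (i3 j0) => h; [right|left] => // | by right].
  case: (ltngtP (k %/ 2 ^ (n - p))%N q) ak => // lt _.
    have := same_lvl ha hq lt => s.
    have r1 : rp (p + (n - p)) k <= lp p q by apply: le_trans i2 s.
    split; right => //; apply: ltW.
      by apply: le_lt_trans r1 _.
    by apply: le_lt_trans r1 (lt_trans oq1 oq2).
  have := same_lvl hq ha lt => s.
  have r1 : rp p q <= lp (p + (n - p)) k by apply: le_trans s i1.
  split; left => //; apply: ltW.
    by apply: lt_le_trans r1; apply: lt_trans oq2.
  by apply: lt_le_trans r1.
Qed.
End Comb.
Set Implicit Arguments. Unset Strict Implicit. Unset Printing Implicit Defensive.
Section Alg.
Variable R : realType.

Lemma posdef_unit' d (A : 'M[R]_d) :
  (forall v : 'cV[R]_d, v != 0 -> 0 < (v^T *m A *m v) 0 0) -> A \in unitmx.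
Proof.
move=> pd; apply/negPn/negP => nu.
have nrf : ~~ row_free A by rewrite row_free_unit.
have kn : kermx A != 0.
  rewrite -mxrank_eq0 mxrank_ker; move: nrf; rewrite /row_free.
  have := rank_leq_row A; lia.
have [i ri] : exists i, row i (kermx A) != 0.
  apply/existsP; move: kn; apply: contraR; rewrite negb_exists => /forallP h.
  by apply/eqP/row_matrixP => i; rewrite row0; apply/eqP; move/negPn: (h i).
have uA : row i (kermx A) *m A = 0 by apply/sub_kermxP/row_sub.
have := pd (row i (kermx A))^T; rewrite trmx_eq0 ri trmxK uA mul0mx mxE => /(_ isT).
by rewrite ltxx.
Qed.

Lemma cholesky_unit d (S sig : 'M[R]_d) :
  (forall i j : 'I_d, (i < j)%N -> sig i j = 0) -> (forall i : 'I_d, 0 < sig i i) ->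
  sig \in unitmx.
Proof.
move=> tr pos; rewrite unitmxE det_trig; last by apply/is_trig_mxP.
rewrite unitfE; apply/lt0r_neq0/prodr_gt0 => i _; exact: pos.
Qed.

Lemma keyY d (G A B sig : 'M[R]_d) :
  A \in unitmx -> B \in unitmx -> A^T = A -> B^T = B ->
  (invmx A *m invmx G *m sig)^T *m A = (invmx B *m invmx G *m sig)^T *m B.
Proof.
move=> uA uB sA sB.
rewrite !trmx_mul !trmx_inv sA sB -!mulmxA !mulVmx // !mulmx1 //.
Qed.

Lemma keyZ d (G A B sig : 'M[R]_d) :
  G \in unitmx -> A \in unitmx -> B \in unitmx -> (A + B) \in unitmx ->
  sig \in unitmx -> A^T = A -> B^T = B ->
  sig *m sig^T = G *m A *m invmx (A + B) *m B *m G^T ->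
  (G^T *m (invmx sig)^T)^T =
  (invmx A *m invmx G *m sig)^T + (invmx B *m invmx G *m sig)^T.
Proof.
move=> uG uA uB uAB us sA sB hs.
rewrite !trmx_mul !trmx_inv !trmxK sA sB.
apply: (@can_inj _ _ (mulmx sig) (mulmx (invmx sig))); first exact: mulKmx.
rewrite [LHS]mulmxA mulmxV // mul1mx mulmxDr !mulmxA hs.
have -> : G *m A *m invmx (A + B) *m B *m G^T *m invmx G^T *m invmx A
   = G *m A *m invmx (A + B) *m (B *m invmx A).
  by rewrite -!mulmxA mulKVmx ?unitmx_tr.
have -> : G *m A *m invmx (A + B) *m B *m G^T *m invmx G^T *m invmx B
   = G *m A *m invmx (A + B) *m (A *m invmx A).
  by rewrite -!mulmxA mulKVmx ?unitmx_tr // mulmxV // mulmxV.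
by rewrite -mulmxDr -mulmxDl [B + A]addrC -!mulmxA mulKmx // mulmxV // mulmx1.
Qed.

End Alg.
Set Implicit Arguments. Unset Strict Implicit. Unset Printing Implicit Defensive.
Section Alg2.
Variable R : realType.

Lemma invmxM' n (X Y : 'M[R]_n) : X \in unitmx -> Y \in unitmx ->
  invmx (X *m Y) = invmx Y *m invmx X.
Proof.
move=> uX uY; have uXY : X *m Y \in unitmx by rewrite unitmx_mul uX uY.
apply: (can_inj (mulKmx uXY)); rewrite mulmxV //.
by rewrite -!mulmxA (mulmxA Y) mulmxV // mul1mx mulmxV.
Qed.

Lemma keyI d (G A sig : 'M[R]_d) : G \in unitmx -> A \in unitmx -> sig \in unitmx ->
  (G^T *m (invmx sig)^T)^T *m invmx G *m (G *m A *m (invmx A *m invmx G *m sig)) = 1%:M.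
Proof.
move=> uG uA us; rewrite trmx_mul !trmxK !mulmxA.
by rewrite mulmxK // mulmxK // mulmxK // mulVmx.
Qed.

Lemma key00 d (G H s : 'M[R]_d) : G \in unitmx -> H \in unitmx -> s \in unitmx ->
  H^T = H -> s *m s^T = G *m H *m G^T ->
  (invmx H *m invmx G *m s)^T *m invmx G *m (G *m H *m (invmx H *m invmx G *m s)) = 1%:M.
Proof.
move=> uG uH us sH hs.
apply: (can_inj (mulKmx us)); rewrite mulmx1.
rewrite !trmx_mul !trmx_inv sH !mulmxA hs.
have uGt : G^T \in unitmx by rewrite unitmx_tr.
by rewrite !mulmxK // mulmxV // mul1mx.
Qed.


Lemma z1 (V : zmodType) (f a c b : V) : f + a + c + b - a - (b + f) - c = 0.
Proof.
rewrite (addrAC _ b (-a)) (addrAC f a c) addrK (addrC b f) (addrAC f c b).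
by rewrite (addrAC (f + b) c) subrr add0r subrr.
Qed.

Lemma comb3 d (Mt Lt Rt X P Q : 'M[R]_d) : Mt = Lt + Rt -> Lt *m Q = Rt *m P ->
  Mt *m (X + Q) - Lt *m X - Rt *m (X + Q + P) = 0.
Proof.
move=> -> e; rewrite mulmxDl !mulmxDr e.
move: (Lt *m X) (Rt *m X) (Rt *m P) (Rt *m Q) => a b c f.
rewrite opprD !addrA; rewrite (addrC (a + c + b)) !addrA.
exact: z1.
Qed.

Lemma comb3r d (Mt Lt Rt Z P Q : 'M[R]_d) : Mt = Lt + Rt -> Lt *m Q = Rt *m P ->
  Mt *m (Z + P) - Lt *m (Z + P + Q) - Rt *m Z = 0.
Proof.
move=> -> e; rewrite mulmxDl !mulmxDr e.
move: (Lt *m Z) (Rt *m Z) (Rt *m P) (Lt *m P) => a b c f.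
rewrite (addrA (a + f) b c) (addrAC (a + f) b c) (addrAC (a + f + c) b).
by rewrite subrr add0r subrr.
Qed.

End Alg2.
Set Implicit Arguments. Unset Strict Implicit. Unset Printing Implicit Defensive.
Section Gen.
Variable R : realType.
Implicit Types (P : (R -> R) -> Prop).

Definition Pclosed P := [/\ forall c : R, P (fun=> c),
  forall f g, P f -> P g -> P (fun t => f t + g t)
  & forall f g, P f -> P g -> P (fun t => f t * g t)].

Lemma sum_P P (I : Type) (s : seq I) (f : I -> R -> R) : Pclosed P ->
  (forall i, P (f i)) -> P (fun t => \sum_(i <- s) f i t).
Proof.
move=> [c a m] h; elim: s => [|x s IH].
  by have -> : (fun t => \sum_(i <- [::]) f i t) = fun=> 0
    by apply: funext => t; rewrite big_nil.
have -> : (fun t => \sum_(i <- x :: s) f i t) = fun t => f x t + \sum_(i <- s) f i t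
  by apply: funext => t; rewrite big_cons.
exact: a.
Qed.

Lemma prod_P P (I : Type) (s : seq I) (f : I -> R -> R) : Pclosed P ->
  (forall i, P (f i)) -> P (fun t => \prod_(i <- s) f i t).
Proof.
move=> [c a m] h; elim: s => [|x s IH].
  by have -> : (fun t => \prod_(i <- [::]) f i t) = fun=> 1
    by apply: funext => t; rewrite big_nil.
have -> : (fun t => \prod_(i <- x :: s) f i t) = fun t => f x t * \prod_(i <- s) f i t
  by apply: funext => t; rewrite big_cons.
exact: m.
Qed.

Lemma det_P P n (M : R -> 'M[R]_n) : Pclosed P ->
  (forall i j, P (fun t => M t i j)) -> P (fun t => \det (M t)).
Proof.
move=> cP h; have [c a m] := cP.
have -> : (fun t => \det (M t)) = fun t => \sum_(s : 'S_n) ((-1) ^+ s * \prod_i M t i (s i))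
  by [].
apply: sum_P => // s; apply: m => //; exact: prod_P.
Qed.

Lemma adj_P P n (M : R -> 'M[R]_n) : Pclosed P ->
  (forall i j, P (fun t => M t i j)) -> forall i j, P (fun t => \adj (M t) i j).
Proof.
move=> cP h i j; have [c a m] := cP.
have -> : (fun t => \adj (M t) i j) =
   fun t => (-1) ^+ (j + i) * \det (row' j (col' i (M t))).
  by apply: funext => t; rewrite mxE.
apply: m => //; apply: det_P => // a' b'.
have -> : (fun t => row' j (col' i (M t)) a' b') = fun t => M t (lift j a') (lift i b').
  by apply: funext => t; rewrite !mxE.
exact: h.
Qed.

Lemma mul_P P m n p (A : R -> 'M[R]_(m, n)) (B : R -> 'M[R]_(n, p)) : Pclosed P ->
  (forall i j, P (fun t => A t i j)) -> (forall i j, P (fun t => B t i j)) ->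
  forall i j, P (fun t => (A t *m B t) i j).
Proof.
move=> cP hA hB i j; have [c a m'] := cP.
have -> : (fun t => (A t *m B t) i j) = fun t => \sum_k (A t i k * B t k j).
  by apply: funext => t; rewrite mxE.
by apply: sum_P => // k; apply: m'.
Qed.

Lemma tr_P P m n (A : R -> 'M[R]_(m, n)) :
  (forall i j, P (fun t => A t i j)) -> forall i j, P (fun t => (A t)^T i j).
Proof.
move=> h i j.
have -> : (fun t => (A t)^T i j) = fun t => A t j i by apply: funext => t; rewrite mxE.
exact: h.
Qed.

Lemma inv_P P n (M : R -> 'M[R]_n) : Pclosed P ->
  P (fun t => (\det (M t))^-1) ->
  (forall i j, P (fun t => M t i j)) ->
  forall i j, P (fun t => ((\det (M t))^-1 *: \adj (M t)) i j).
Proof.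
move=> cP hd h i j; have [c a m'] := cP.
have -> : (fun t => ((\det (M t))^-1 *: \adj (M t)) i j) =
   fun t => (\det (M t))^-1 * \adj (M t) i j.
  by apply: funext => t; rewrite mxE.
apply: m' => //; exact: adj_P.
Qed.

Definition Pcv (A : set R) (x : R) : (R -> R) -> Prop :=
  fun f => f t @[t --> within A (nbhs x)] --> f x.

Lemma Pcv_closed A x : Pclosed (Pcv A x).
Proof.
split.
- by move=> c; apply: cvg_cst.
- by move=> f g hf hg; apply: cvgD.
- by move=> f g hf hg; apply: cvgM.
Qed.

Lemma Pcv_inv A x f : f x != 0 -> Pcv A x f -> Pcv A x (fun t => (f t)^-1).
Proof. by move=> h hf; apply: cvgV. Qed.

Definition Pder (x : R) : (R -> R) -> Prop := fun f => derivable f x 1.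

Lemma Pder_closed x : Pclosed (Pder x).
Proof.
split.
- by move=> c; apply: derivable_cst.
- by move=> f g hf hg; apply: derivableD.
- by move=> f g hf hg; apply: derivableM.
Qed.

Lemma Pder_inv x f : f x != 0 -> Pder x f -> Pder x (fun t => (f t)^-1).
Proof. by move=> h hf; apply: derivableV. Qed.

Lemma is_deriveM' (f g : R -> R) (x df dg : R) : is_derive x (1:R) f df -> is_derive x 1 g dg ->
  is_derive x 1 (fun u => f u * g u) (f x * dg + g x * df).
Proof. move=> hf hg; exact: is_deriveM hf hg. Qed.

Lemma is_derive_sum' (I : Type) (s : seq I) (f : I -> R -> R) (df : I -> R) x :
  (forall i, is_derive x (1:R) (f i) (df i)) ->
  is_derive x 1 (fun u => \sum_(i <- s) f i u) (\sum_(i <- s) df i).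
Proof.
move=> h; elim: s => [|a s IH].
  have -> : (fun u => \sum_(i <- [::]) f i u) = cst 0 by apply: funext => u; rewrite big_nil.
  by rewrite big_nil; apply: is_derive_cst.
have -> : (fun u => \sum_(i <- a :: s) f i u) = (f a + fun u => \sum_(i <- s) f i u)
  by apply: funext => u; rewrite big_cons.
by rewrite big_cons; apply: is_deriveD.
Qed.

End Gen.
Unset Implicit Arguments.
Section Flow.
Variable R : realType.
Variable d : nat.
Variables (alpha : R -> 'M[R]_d) (F : R -> R -> 'M[R]_d).
Hypothesis Fss : forall s : R, s \in `[0, 1] -> F s s = 1%:M.
Hypothesis Fc : forall s : R, s \in `[0, 1] -> forall i j,
      {within `[0, 1], continuous (fun t => F s t i j)}.
Hypothesis Fd : forall s : R, s \in `[0, 1] -> forall t : R, t \in `]0, 1[ -> forall i j,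
      is_derive t 1 (fun u => F s u i j) ((alpha t *m F s t) i j).
Hypothesis Fu : forall t : R, t \in `[0, 1] -> F 0 t \in unitmx.

Lemma in01_0 : (0:R) \in `[0, 1].
Proof. by rewrite in_itv /= lexx ler01. Qed.

Lemma oo_cc (t : R) : t \in `]0, 1[ -> t \in `[0, 1].
Proof. by rewrite !in_itv /= => /andP[a b]; rewrite !ltW. Qed.

Lemma invmxE' n (A : 'M[R]_n) : A \in unitmx -> invmx A = (\det A)^-1 *: \adj A.
Proof. by rewrite /invmx => ->. Qed.

Definition Wf (s t : R) := ((\det (F 0 t))^-1 *: \adj (F 0 t)) *m F s t.

Lemma detF0 (t : R) : t \in `[0, 1] -> \det (F 0 t) != 0.
Proof. by move=> /Fu; rewrite unitmxE unitfE. Qed.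

Lemma Wf_E (s t : R) : t \in `[0, 1] -> Wf s t = invmx (F 0 t) *m F s t.
Proof. by move=> h; rewrite /Wf invmxE' // Fu. Qed.

Lemma Fc_P (s : R) : s \in `[0, 1] -> forall x : R, x \in `[0, 1] -> forall i j,
  Pcv `[0, 1] x (fun t => F s t i j).
Proof. move=> hs x hx i j; have := ((@subspace_continuousP R _ R _).1 (Fc s hs i j)).
by apply. Qed.

Lemma Wf_cont (s : R) : s \in `[0, 1] -> forall i j,
  {within `[0, 1], continuous (fun t => Wf s t i j)}.
Proof.
move=> hs i j; apply/subspace_continuousP => x hx.
apply: (mul_P (Pcv_closed _ _)); last by move=> a b; exact: (Fc_P s hs x hx).
apply: (inv_P (Pcv_closed _ _)); last by move=> a b; exact: (Fc_P 0 in01_0 x hx).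
apply: Pcv_inv; first exact: detF0 x hx.
apply: (det_P (Pcv_closed _ _)) => a b; exact: (Fc_P 0 in01_0 x hx).
Qed.

Lemma Wf_der (s : R) : s \in `[0, 1] -> forall t : R, t \in `]0, 1[ -> forall i j,
  derivable (fun u => Wf s u i j) t 1.
Proof.
move=> hs t ht i j.
have Fd' : forall s, s \in `[0, 1] -> forall a b, Pder t (fun u => F s u a b).
  by move=> s' hs' a b; apply: ex_derive; apply: Fd s' hs' t ht a b.
apply: (mul_P (Pder_closed _)); last by move=> a b; exact: (Fd' s hs).
apply: (inv_P (Pder_closed _)); last by move=> a b; exact: (Fd' 0 in01_0).
apply: Pder_inv; first exact/(detF0 t)/oo_cc.
apply: (det_P (Pder_closed _)) => a b; exact: (Fd' 0 in01_0).
Qed.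

Lemma Wf_der0 (s : R) : s \in `[0, 1] -> forall t : R, t \in `]0, 1[ -> forall i j,
  is_derive t 1 (fun u => Wf s u i j) 0.
Proof.
move=> hs t ht.
have ht' := oo_cc t ht; have uF := Fu t ht'.
pose DW := \matrix_(i, j) 'D_1 (fun u => Wf s u i j) t.
have hW : forall i j, is_derive t 1 (fun u => Wf s u i j) (DW i j).
  by move=> i j; rewrite mxE; apply: derivableP; apply: Wf_der s hs t ht i j.
have key : forall i j, (F 0 t *m DW) i j = 0.
  move=> i j.
  have h1 : is_derive t 1 (fun u => \sum_k F 0 u i k * Wf s u k j)
     (\sum_k (F 0 t i k * DW k j + Wf s t k j * (alpha t *m F 0 t) i k)).
    apply: is_derive_sum' => k; apply: is_deriveM' => //.
    exact: (Fd 0 in01_0 t ht).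
  have h2 : is_derive t 1 (fun u => F s u i j)
     (\sum_k (F 0 t i k * DW k j + Wf s t k j * (alpha t *m F 0 t) i k)).
    apply: near_eq_is_derive h1.
    apply: filterS (near_in_itvoo ht) => u hu.
    have hu' := oo_cc u hu; have uFu := Fu u hu'.
    symmetry; rewrite -{1}(mulKVmx uFu (F s u)) mxE; apply: eq_bigr => k _.
    by rewrite Wf_E.
  have E := @derive_val _ _ _ _ _ _ _ h2.
  rewrite (@derive_val _ _ _ _ _ _ _ (Fd s hs t ht i j)) big_split /= in E.
  have HH : (alpha t *m F s t) = (alpha t *m F 0 t) *m Wf s t.
    by rewrite Wf_E // -mulmxA mulKVmx.
  rewrite HH mxE in E.
  have E2 : \sum_k Wf s t k j * (alpha t *m F 0 t) i k =
     \sum_k (alpha t *m F 0 t) i k * Wf s t k j by apply: eq_bigr => k _; rewrite mulrC.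
  rewrite E2 in E; rewrite mxE.
  by apply: (@addIr _ (\sum_k (alpha t *m F 0 t) i k * Wf s t k j)) ; rewrite add0r -E.
have DW0 : DW = 0.
  have : F 0 t *m DW = 0 by apply/matrixP => i j; rewrite key mxE.
  move=> /(congr1 (mulmx (invmx (F 0 t)))); rewrite mulKmx //.
  by rewrite mulmx0.
by move=> i j; have := hW i j; rewrite DW0 mxE.
Qed.

Lemma Wf_const (s : R) : s \in `[0, 1] -> forall t : R, t \in `[0, 1] -> Wf s t = Wf s 0.
Proof.
move=> hs t ht; apply/matrixP => i j.
have t0 : 0 <= t by move: ht; rewrite in_itv /= => /andP[].
have t1 : t <= 1 by move: ht; rewrite in_itv /= => /andP[].
have hd : forall x, x \in `]0, t[ -> is_derive x 1 (fun u => Wf s u i j) ((fun=> 0) x).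
  move=> x hx; apply: Wf_der0 => //.
  by move: hx; rewrite !in_itv /= => /andP[a b]; rewrite a /= (lt_le_trans b t1).
have hc : {within `[0, t], continuous (fun u => Wf s u i j)}.
  apply: continuous_subspaceW (Wf_cont s hs i j).
  move=> x /=; rewrite !in_itv /= => /andP[a b]; rewrite a /=; exact: le_trans b t1.
have [c _] := @MVT_segment R (fun u => Wf s u i j) (fun=> 0) 0 t t0 hd hc.
by rewrite mul0r => /eqP; rewrite subr_eq0 => /eqP.
Qed.

Lemma flow (s t : R) : s \in `[0, 1] -> t \in `[0, 1] -> F s t = F 0 t *m invmx (F 0 s).
Proof.
move=> hs ht.
have e1 : Wf s t = Wf s s by rewrite (Wf_const s hs t ht) (Wf_const s hs s hs).
move: e1; rewrite !Wf_E // Fss // mulmx1 => <-.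
by rewrite mulKVmx // Fu.
Qed.

End Flow.
Set Implicit Arguments.
Unset Implicit Arguments.
Section Integ.
Variable R : realType.
Variables d mm : nat.
Variables (alpha : R -> 'M[R]_d) (sG : R -> 'M[R]_(d, mm)) (F : R -> R -> 'M[R]_d).
Hypothesis HsG : forall i j, {within `[0, 1], continuous (fun t => sG t i j)}.
Hypothesis Fss : forall s : R, s \in `[0, 1] -> F s s = 1%:M.
Hypothesis Fc : forall s : R, s \in `[0, 1] -> forall i j,
      {within `[0, 1], continuous (fun t => F s t i j)}.
Hypothesis Fd : forall s : R, s \in `[0, 1] -> forall t : R, t \in `]0, 1[ -> forall i j,
      is_derive t 1 (fun u => F s u i j) ((alpha t *m F s t) i j).
Hypothesis Fu : forall t : R, t \in `[0, 1] -> F 0 t \in unitmx.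

Definition Pc (f : R -> R) := {within `[0, 1], continuous f}.

Lemma Pc_of (f : R -> R) : (forall x : R, x \in `[0, 1] -> Pcv `[0, 1] x f) -> Pc f.
Proof. by move=> h; apply/subspace_continuousP => x hx; apply: h. Qed.

Lemma Pc_to (f : R -> R) : Pc f -> forall x : R, x \in `[0, 1] -> Pcv `[0, 1] x f.
Proof. by move=> h x hx; apply: ((@subspace_continuousP R _ R _).1 h). Qed.

Lemma Pc_closed : Pclosed Pc.
Proof.
split.
- move=> c; apply: Pc_of => x hx; have [c1 c2 c3] := Pcv_closed `[0, 1]%classic x; exact: c1.
- move=> f g hf hg; apply: Pc_of => x hx; have [c1 c2 c3] := Pcv_closed `[0, 1]%classic x.
  apply: c2; [exact: Pc_to hf x hx|exact: Pc_to hg x hx].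
- move=> f g hf hg; apply: Pc_of => x hx; have [c1 c2 c3] := Pcv_closed `[0, 1]%classic x.
  apply: c3; [exact: Pc_to hf x hx|exact: Pc_to hg x hx].
Qed.

Lemma Pc_cst c : Pc (fun=> c). Proof. have [h _ _] := Pc_closed; exact: h. Qed.
Lemma Pc_mul f g : Pc f -> Pc g -> Pc (fun t => f t * g t).
Proof. have [_ _ h] := Pc_closed; exact: h. Qed.

Lemma sub01 (a b : R) : 0 <= a -> b <= 1 -> `[a, b]%classic `<=` `[0, 1]%classic.
Proof.
move=> a0 b1 x /=; rewrite !in_itv /= => /andP[h1 h2].
by rewrite (le_trans a0 h1) (le_trans h2 b1).
Qed.

Lemma Pc_int (f : R -> R) (a b : R) : 0 <= a -> b <= 1 -> Pc f ->
  (@lebesgue_measure R).-integrable `[a, b] (EFin \o f).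
Proof.
move=> a0 b1 hf; apply: continuous_compact_integrable; first exact: segment_compact.
exact: continuous_subspaceW (sub01 a b a0 b1) hf.
Qed.

Lemma Rint_sum (I : Type) (s : seq I) (f : I -> R -> R) (a b : R) :
  0 <= a -> b <= 1 -> (forall i, Pc (f i)) ->
  Rintegral (@lebesgue_measure R) `[a, b] (fun w => \sum_(i <- s) f i w) =
  \sum_(i <- s) Rintegral (@lebesgue_measure R) `[a, b] (f i).
Proof.
move=> a0 b1 h; elim: s => [|x s IH].
  rewrite big_nil.
  have -> : (fun w => \sum_(i <- [::]) f i w) = fun=> 0 by apply: funext => w; rewrite big_nil.
  by rewrite Rintegral_cst ?mul0r //; exact: measurable_itv.
have -> : (fun w => \sum_(i <- x :: s) f i w) = fun w => f x w + \sum_(i <- s) f i w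
  by apply: funext => w; rewrite big_cons.
have hs : Pc (fun w => \sum_(i <- s) f i w) by apply: sum_P => //; exact: Pc_closed.
rewrite big_cons RintegralD ?IH //.
- exact: (Pc_int _ a b a0 b1 (h x)).
- exact: (Pc_int _ a b a0 b1 hs).
Qed.

Lemma mx_int_mul n p q (C : 'M[R]_(p, n)) (K : R -> 'M[R]_n) (D : 'M[R]_(n, q)) (a b : R) :
  0 <= a -> b <= 1 -> (forall i j, Pc (fun w => K w i j)) ->
  mx_integral (fun w => C *m K w *m D) a b = C *m mx_integral K a b *m D.
Proof.
move=> a0 b1 hK; apply/matrixP => i j; rewrite !mxE.
have e : forall w, (C *m K w *m D) i j = \sum_l \sum_k (C i k * D l j * K w k l).
  move=> w; rewrite mxE; apply: eq_bigr => l _; rewrite mxE mulr_suml.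
  by apply: eq_bigr => k _; rewrite mulrAC.
have -> : (fun w => (C *m K w *m D) i j) = fun w => \sum_l \sum_k (C i k * D l j * K w k l)
  by apply: funext => w; rewrite e.
rewrite Rint_sum //; last first.
  move=> l; apply: sum_P; first exact: Pc_closed.
  move=> k; apply: Pc_mul; [exact: Pc_cst|exact: hK].
apply: eq_bigr => l _; rewrite Rint_sum //; last first.
  move=> k; apply: Pc_mul; [exact: Pc_cst|exact: hK].
rewrite !mxE mulr_suml; apply: eq_bigr => k _.
rewrite RintegralZl //; first by rewrite !mxE mulrAC.
exact: (Pc_int _ a b a0 b1 (hK k l)).
Qed.

Lemma mx_int_pt n (K : R -> 'M[R]_n) (a : R) : mx_integral K a a = 0.
Proof.
apply/matrixP => i j; rewrite !mxE set_itv1; exact: Rintegral_set1.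
Qed.

Lemma aux_sub (x y z : R) : x - y = z -> x = y + z.
Proof. by move=> <-; rewrite addrC subrK. Qed.

Lemma mx_int_split n (K : R -> 'M[R]_n) (a b c : R) :
  0 <= a -> a <= b -> b <= c -> c <= 1 -> (forall i j, Pc (fun w => K w i j)) ->
  mx_integral K a c = mx_integral K a b + mx_integral K b c.
Proof.
move=> a0 ab bc c1 hK; apply/matrixP => i j; rewrite !mxE.
have itf := Pc_int (fun w => K w i j) a c a0 c1 (hK i j).
have := Rintegral_itvB itf (_ : (BLeft a <= BRight b)%O) (_ : (BRight b <= BRight c)%O).
rewrite Rintegral_itv_obnd_cbnd.
- move=> e; apply: aux_sub; exact: e.
- apply: (integrableS _ _ _ itf); [exact: measurable_itv|exact: measurable_itv|].
  move=> x /=; rewrite !in_itv /= => /andP[h1 h2]; rewrite h2 andbT.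
  exact: le_trans ab (ltW h1).
all: by rewrite bnd_simp.
Qed.

End Integ.
Set Implicit Arguments.
Unset Implicit Arguments.
Section Hh.
Variable R : realType.
Variables d mm : nat.
Variables (alpha : R -> 'M[R]_d) (sG : R -> 'M[R]_(d, mm)) (F : R -> R -> 'M[R]_d).
Hypothesis HsG : forall i j, {within `[0, 1], continuous (fun t => sG t i j)}.
Hypothesis Fss : forall s : R, s \in `[0, 1] -> F s s = 1%:M.
Hypothesis Fc : forall s : R, s \in `[0, 1] -> forall i j,
      {within `[0, 1], continuous (fun t => F s t i j)}.
Hypothesis Fd : forall s : R, s \in `[0, 1] -> forall t : R, t \in `]0, 1[ -> forall i j,
      is_derive t 1 (fun u => F s u i j) ((alpha t *m F s t) i j).
Hypothesis Fu : forall t : R, t \in `[0, 1] -> F 0 t \in unitmx.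

Let flowF := flow R d alpha F Fss Fc Fd Fu.

Definition Kint (u w : R) := F w u *m Gam sG w *m (F w u)^T.

Definition Winv (w : R) := (\det (F 0 w))^-1 *: \adj (F 0 w).

Lemma Kint_E u w : u \in `[0, 1] -> w \in `[0, 1] ->
  Kint u w = (F 0 u *m Winv w) *m Gam sG w *m (F 0 u *m Winv w)^T.
Proof. by move=> hu hw; rewrite /Kint /Winv flowF // invmxE' // Fu. Qed.

Lemma Kint_cont u : u \in `[0, 1] -> forall i j, Pc R (fun w => Kint u w i j).
Proof.
move=> hu i j.
have hc : Pc R (fun w => ((F 0 u *m Winv w) *m Gam sG w *m (F 0 u *m Winv w)^T) i j).
  apply: Pc_of => x hx.
  have cP := Pcv_closed `[0, 1]%classic x.
  have hW : forall a b, Pcv `[0, 1] x (fun w => (F 0 u *m Winv w) a b).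
    apply: (mul_P cP); first by move=> a b; have [c1 _ _] := cP; exact: c1.
    apply: (inv_P cP); last by move=> a b; exact: (Fc_P R d F Fc 0 (in01_0 R) x hx).
    apply: Pcv_inv; first exact: (detF0 R d F Fu x hx).
    apply: (det_P cP) => a b; exact: (Fc_P R d F Fc 0 (in01_0 R) x hx).
  have hS : forall a b, Pcv `[0, 1] x (fun w => sG w a b).
    by move=> a b; apply: ((@subspace_continuousP R _ R _).1 (HsG a b)).
  apply: (mul_P cP); last by apply: tr_P.
  apply: (mul_P cP) => //.
  rewrite /Gam; apply: (mul_P cP) => //; exact: tr_P.
apply: (subspace_eq_continuous _ hc) => w hw /=.
have hw' : w \in `[0, 1] by move: hw; rewrite in_setE.
by rewrite /from_subspace /= Kint_E.
Qed.

Lemma Kint0 u w : u \in `[0, 1] -> w \in `[0, 1] ->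
  Kint u w = F 0 u *m Kint 0 w *m (F 0 u)^T.
Proof.
move=> hu hw; rewrite !Kint_E // ?in01_0 // Fss ?in01_0 // mul1mx.
by rewrite trmx_mul !mulmxA.
Qed.

Lemma hu_split u (a b c : R) : u \in `[0, 1] ->
  0 <= a -> a <= b -> b <= c -> c <= 1 ->
  hu F sG u a c = hu F sG u a b + hu F sG u b c.
Proof.
move=> hu' a0 ab bc c1; rewrite /hu.
exact: (mx_int_split R d (Kint u) a b c a0 ab bc c1 (Kint_cont u hu')).
Qed.

Lemma hu_pt u (a : R) : hu F sG u a a = 0.
Proof. exact: mx_int_pt. Qed.

Lemma hu_conj u (a b : R) : u \in `[0, 1] -> 0 <= a -> b <= 1 ->
  hu F sG u a b = F 0 u *m h0 F sG a b *m (F 0 u)^T.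
Proof.
move=> hu' a0 b1; rewrite /h0 /hu.
rewrite -(mx_int_mul R d d d (F 0 u) (Kint 0) (F 0 u)^T a b a0 b1 (Kint_cont 0 (in01_0 R))).
apply/matrixP => i j; rewrite !mxE; apply: eq_Rintegral => w.
rewrite inE /= in_itv /= => /andP[h1 h2].
have hw : w \in `[0, 1] by rewrite in_itv /= (le_trans a0 h1) (le_trans h2 b1).
by rewrite -/(Kint u w) Kint0.
Qed.

Lemma h0_sym (a b : R) : (h0 F sG a b)^T = h0 F sG a b.
Proof.
apply/matrixP => i j; rewrite !mxE; apply: eq_Rintegral => w _.
have E : (F w 0 *m Gam sG w *m (F w 0)^T)^T = F w 0 *m Gam sG w *m (F w 0)^T.
  by rewrite /Gam !trmx_mul !trmxK !mulmxA.
by rewrite -[in LHS]E mxE.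
Qed.

End Hh.
Set Implicit Arguments.
Unset Implicit Arguments.
Section Main.
Variables (R : realType) (d mm : nat)
  (alpha : R -> 'M[R]_d) (sG : R -> 'M[R]_(d, mm)) (F : R -> R -> 'M[R]_d)
  (sigma : nat -> nat -> 'M[R]_d) (rho : R) (lp mp rp : nat -> nat -> R).
Hypothesis HsG : forall i j, {within `[0, 1], continuous (fun t => sG t i j)}.
Hypothesis Fss : forall s : R, s \in `[0, 1] -> F s s = 1%:M.
Hypothesis Fc : forall s : R, s \in `[0, 1] -> forall i j,
      {within `[0, 1], continuous (fun t => F s t i j)}.
Hypothesis Fd : forall s : R, s \in `[0, 1] -> forall t : R, t \in `]0, 1[ -> forall i j,
      is_derive t 1 (fun u => F s u i j) ((alpha t *m F s t) i j).
Hypothesis Hpd : forall u v : R, 0 <= u -> u < v -> v <= 1 ->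
      posdef (F u v *m hu F sG u u v *m (F u v)^T).
Hypothesis H10 : lp 1%N 0%N = 0.
Hypothesis H11 : rp 1%N 0%N = 1.
Hypothesis Hn : forall n k, (0 < n)%N -> (k < 2 ^ n.-1)%N ->
     [/\ lp n.+1 k.*2 = lp n k, rp n.+1 k.*2 = mp n k,
         lp n.+1 k.*2.+1 = mp n k & rp n.+1 k.*2.+1 = rp n k].
Hypothesis Ho : forall n k, (0 < n)%N -> (k < 2 ^ n.-1)%N ->
     [/\ lp n k < mp n k, mp n k < rp n k &
         Num.max (rp n k - mp n k) (mp n k - lp n k) < rho * (rp n k - lp n k)].
Hypothesis Hc0 : is_cholesky (gfl F 1 *m h0 F sG 0 1 *m (gfl F 1)^T) (sigma 0%N 0%N).
Hypothesis Hc : forall n k, (0 < n)%N -> (k < 2 ^ n.-1)%N ->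
     is_cholesky (Sigma F sG (lp n k) (mp n k) (rp n k)) (sigma n k).

Lemma Ho' n k : (0 < n)%N -> (k < 2 ^ n.-1)%N -> lp n k < mp n k /\ mp n k < rp n k.
Proof. by move=> a b; have [] := Ho n k a b. Qed.

Lemma in01 (x : R) : 0 <= x -> x <= 1 -> x \in `[0, 1].
Proof. by move=> a b; rewrite in_itv /= a b. Qed.

Lemma Fu : forall t : R, t \in `[0, 1] -> F 0 t \in unitmx.
Proof.
move=> t; rewrite in_itv /= => /andP[t0 t1].
have [->|tp] := eqVneq t 0.
  by rewrite (Fss 0 (in01_0 R)) unitmx1.
have t0' : 0 < t by rewrite lt_neqAle eq_sym tp t0.
have := posdef_unit' (Hpd 0 t (lexx 0) t0' t1).
by rewrite !unitmx_mul => /andP[/andP[]].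
Qed.

Lemma h0split (a b c : R) : 0 <= a -> a <= b -> b <= c -> c <= 1 ->
  h0 F sG a c = h0 F sG a b + h0 F sG b c.
Proof. exact: (hu_split R d mm alpha sG F HsG Fss Fc Fd Fu 0 a b c (in01_0 R)). Qed.

Lemma h0pt (a : R) : h0 F sG a a = 0.
Proof. exact: hu_pt. Qed.

Lemma hunit (a b : R) : 0 <= a -> a < b -> b <= 1 -> h0 F sG a b \in unitmx.
Proof.
move=> a0 ab b1.
have := posdef_unit' (Hpd a b a0 ab b1).
rewrite !unitmx_mul => /andP[/andP[_ hh] _].
move: hh; rewrite (hu_conj R d mm alpha sG F HsG Fss Fc Fd Fu a a b) //.
- by rewrite !unitmx_mul => /andP[/andP[]].
- by apply: in01 => //; apply: ltW; apply: lt_le_trans b1.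
Qed.

Lemma cancelG (X G f : 'M[R]_d) : G \in unitmx -> X *m invmx G *m (G *m f) = X *m f.
Proof. by move=> uG; rewrite -mulmxA mulKmx. Qed.

Lemma sig_simpl (G A B C : 'M[R]_d) : G \in unitmx -> C \in unitmx ->
  G *m A *m G^T *m invmx (G *m C *m G^T) *m (G *m B *m G^T) =
  G *m A *m invmx C *m B *m G^T.
Proof.
move=> uG uC; have uGt : G^T \in unitmx by rewrite unitmx_tr.
rewrite !invmxM' ?unitmx_mul ?uG ?uC ?uGt // !mulmxA.
by rewrite mulmxK // mulmxKV.
Qed.

Lemma keyI' (G A sig : 'M[R]_d) : G \in unitmx -> A \in unitmx -> sig \in unitmx ->
  (G^T *m (invmx sig)^T)^T *m (A *m (invmx A *m invmx G *m sig)) = 1%:M.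
Proof.
move=> uG uA us; rewrite trmx_mul !trmxK !mulmxA.
by rewrite mulmxK // mulmxK // mulVmx.
Qed.

Definition Mt n k := (Mmat F (sigma n k) (mp n k))^T.
Definition Lt n k := (Lmat F sG (sigma n k) (lp n k) (mp n k))^T.
Definition Rt n k := (Rmat F sG (sigma n k) (mp n k) (rp n k))^T.

Lemma vfacts n k : vld n k ->
  [/\ 0 <= lp n k, rp n k <= 1, lp n k < mp n k & mp n k < rp n k].
Proof.
move=> hv; have [a b] := @vld_01 R lp mp rp H10 H11 Hn Ho' n k hv.
by have [c e] := @vld_ord R lp mp rp Ho' n k hv; split.
Qed.

Lemma sig_unit n k : vld n k -> sigma n k \in unitmx.
Proof.
move=> /andP[a b]; have [h1 h2 _] := Hc n k a b.
exact: cholesky_unit 0 _ h1 h2.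
Qed.

Lemma ZY n k : vld n k ->
  Mt n k = Lt n k + Rt n k /\
  Lt n k *m h0 F sG (lp n k) (mp n k) = Rt n k *m h0 F sG (mp n k) (rp n k).
Proof.
move=> hv; have [l0 r1 lm mr] := vfacts n k hv.
have m01 : mp n k \in `[0, 1].
  by apply: in01; [apply: ltW; apply: le_lt_trans lm | apply: ltW; apply: lt_le_trans r1].
have uA := hunit _ _ l0 lm (ltW (lt_le_trans mr r1)).
have uB := hunit _ _ (ltW (le_lt_trans l0 lm)) mr r1.
have e : h0 F sG (lp n k) (rp n k) = h0 F sG (lp n k) (mp n k) + h0 F sG (mp n k) (rp n k).
  by apply: h0split => //; apply: ltW.
have uAB : h0 F sG (lp n k) (mp n k) + h0 F sG (mp n k) (rp n k) \in unitmx.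
  by rewrite -e; apply: hunit => //; apply: lt_trans mr.
have us := sig_unit n k hv.
split; last by apply: keyY => //; apply: h0_sym.
rewrite /Mt /Lt /Rt /Mmat /Lmat /Rmat /gfl.
apply: keyZ => //; try exact: h0_sym.
- exact: Fu.
- have /andP[a b] := hv; have [_ _ ->] := Hc n k a b.
  rewrite /Sigma.
  have m1 : mp n k <= 1 by apply: ltW; apply: lt_le_trans r1.
  have m0 : 0 <= mp n k by apply: ltW; apply: le_lt_trans lm.
  rewrite !(hu_conj R d mm alpha sG F HsG Fss Fc Fd Fu (mp n k)) //.
  rewrite e sig_simpl //; exact: Fu.
Qed.


Lemma pts n k : vld n k ->
  [/\ lp n k \in `[0, 1], mp n k \in `[0, 1] & rp n k \in `[0, 1]].
Proof.
move=> hv; have [l0 r1 lm mr] := vfacts n k hv.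
have m0 : 0 <= mp n k by apply: ltW; apply: le_lt_trans lm.
have m1 : mp n k <= 1 by apply: ltW; apply: lt_le_trans r1.
split; apply: in01 => //.
- exact: ltW (lt_le_trans lm m1).
- exact: le_trans m0 (ltW mr).
Qed.

Lemma DeltaE p q x (fl fm fr : 'M[R]_d) : vld p q ->
  x (lp p q) = gfl F (lp p q) *m fl -> x (mp p q) = gfl F (mp p q) *m fm ->
  x (rp p q) = gfl F (rp p q) *m fr ->
  Delta F sG sigma lp mp rp p q x = Mt p q *m fm - Lt p q *m fl - Rt p q *m fr.
Proof.
move=> hv el em er; have [pl pm pr] := pts p q hv.
have p0 : p != 0%N by move: hv => /andP[hh _]; rewrite -lt0n.
rewrite /Delta (negbTE p0) /= el em er !cancelG //; exact: Fu.
Qed.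

Lemma psiL n k t : vld n k -> lp n k <= t -> t <= mp n k ->
  psi F sG sigma lp mp rp n k t = gfl F t *m (h0 F sG (lp n k) t *m (Lt n k)^T).
Proof.
move=> hv h1 h2; have n0 : n != 0%N by move: hv => /andP[hh _]; rewrite -lt0n.
by rewrite /psi (negbTE n0) /psi_nk h1 h2 /= mulmxA /Lt trmxK.
Qed.

Lemma psiR n k t : vld n k -> mp n k <= t -> t <= rp n k ->
  psi F sG sigma lp mp rp n k t = gfl F t *m (h0 F sG t (rp n k) *m (Rt n k)^T).
Proof.
move=> hv h1 h2; have n0 : n != 0%N by move: hv => /andP[hh _]; rewrite -lt0n.
have [l0 r1 lm mr] := vfacts n k hv.
have [pl pm pr] := pts n k hv.
have [->|tm] := eqVneq t (mp n k).
  rewrite /psi (negbTE n0) /psi_nk (ltW lm) lexx /= /Rt trmxK /Lmat /Rmat !mulmxA.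
  have uA := hunit _ _ l0 lm (ltW (lt_le_trans mr r1)).
  have uB := hunit _ _ (ltW (le_lt_trans l0 lm)) mr r1.
  by rewrite !mulmxK.
have tgt : mp n k < t by rewrite lt_neqAle eq_sym tm h1.
by rewrite /psi (negbTE n0) /psi_nk (lt_geF tgt) andbF h1 h2 /= mulmxA /Rt trmxK.
Qed.

Lemma psi0 n k t : vld n k -> (t <= lp n k) || (rp n k <= t) ->
  psi F sG sigma lp mp rp n k t = 0.
Proof.
move=> hv; have n0 : n != 0%N by move: hv => /andP[hh _]; rewrite -lt0n.
have [l0 r1 lm mr] := vfacts n k hv.
rewrite /psi (negbTE n0) /psi_nk.
case/orP => [tl|rt].
  have [->|tl'] := eqVneq t (lp n k).
    by rewrite lexx (ltW lm) /= h0pt mulmx0 mul0mx.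
  have tl2 : t < lp n k by rewrite lt_neqAle tl' tl.
  by rewrite (lt_geF tl2) (lt_geF (lt_trans tl2 lm)).
have [->|rt'] := eqVneq t (rp n k).
  by rewrite (lt_geF mr) andbF (ltW mr) lexx /= h0pt mulmx0 mul0mx.
have rt2 : rp n k < t by rewrite lt_neqAle eq_sym rt' rt.
by rewrite (lt_geF (lt_trans mr rt2)) (lt_geF rt2) !andbF.
Qed.

Lemma leftcase p q a (C : 'M[R]_d) : vld p q -> 0 <= a -> a <= lp p q ->
  Mt p q *m (h0 F sG a (mp p q) *m C) - Lt p q *m (h0 F sG a (lp p q) *m C)
  - Rt p q *m (h0 F sG a (rp p q) *m C) = 0.
Proof.
move=> hv a0 al; have [l0 r1 lm mr] := vfacts p q hv.
have [Za Zb] := ZY p q hv.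
have m1 : mp p q <= 1 by apply: ltW; apply: lt_le_trans r1.
rewrite (h0split a (lp p q) (mp p q)) ?(ltW lm) //.
rewrite (h0split a (lp p q) (rp p q)) ?(ltW (lt_trans lm mr)) //.
rewrite (h0split (lp p q) (mp p q) (rp p q)) ?(ltW lm) ?(ltW mr) //.
rewrite !mulmxDl addrA; apply: comb3 Za _.
by rewrite !mulmxA Zb.
Qed.

Lemma rightcase p q b (C : 'M[R]_d) : vld p q -> rp p q <= b -> b <= 1 ->
  Mt p q *m (h0 F sG (mp p q) b *m C) - Lt p q *m (h0 F sG (lp p q) b *m C)
  - Rt p q *m (h0 F sG (rp p q) b *m C) = 0.
Proof.
move=> hv rb b1; have [l0 r1 lm mr] := vfacts p q hv.
have [Za Zb] := ZY p q hv.
have m0 : 0 <= mp p q by apply: ltW; apply: le_lt_trans lm.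
have mb : mp p q <= b by apply: ltW; apply: lt_le_trans rb.
rewrite (h0split (lp p q) (mp p q) b) ?(ltW lm) //.
rewrite (h0split (mp p q) (rp p q) b) ?(ltW mr) //.
set A' := h0 F sG (lp p q) (mp p q); set B' := h0 F sG (mp p q) (rp p q).
set Y := h0 F sG (rp p q) b.
have e1 : (B' + Y) *m C = Y *m C + B' *m C by rewrite mulmxDl addrC.
have e2 : (A' + (B' + Y)) *m C = Y *m C + B' *m C + A' *m C.
  by rewrite !mulmxDl addrC (addrC (B' *m C)).
rewrite e1 e2; apply: comb3r Za _.
by rewrite !mulmxA Zb.
Qed.

Lemma selfcase n k : vld n k ->
  Delta F sG sigma lp mp rp n k (psi F sG sigma lp mp rp n k) = 1%:M.
Proof.
move=> hv; have [l0 r1 lm mr] := vfacts n k hv.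
rewrite (DeltaE n k _ 0 (h0 F sG (lp n k) (mp n k) *m (Lt n k)^T) 0) //.
- rewrite !mulmx0 !subr0 /Mt /Lt trmxK /Mmat /Lmat.
  apply: keyI'.
  + by have [_ pm _] := pts n k hv; exact: Fu.
  + exact: hunit _ _ l0 lm (ltW (lt_le_trans mr r1)).
  + exact: sig_unit n k hv.
- by rewrite mulmx0 psi0 // lexx.
- by rewrite psiL // ltW.
- by rewrite mulmx0 psi0 // lexx orbT.
Qed.

Lemma main_thm n k p q : inI n k -> inI p q ->
  Delta F sG sigma lp mp rp p q (psi F sG sigma lp mp rp n k) =
  (if (n == p) && (k == q) then 1 else 0)%:M.
Proof.
move=> hk; case/orP => [/andP[/eqP p0 /eqP q0]|hq].
  subst p q; rewrite /Delta /=.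
  case/orP: hk => [/andP[/eqP n0 /eqP k0]|hk].
    subst n k; rewrite /psi /= /psi_00 /L00.
    have [h1 h2 h3] := Hc0.
    apply: key00 => //.
    + exact/Fu/in01.
    + by apply: hunit => //; exact: ltr01.
    + exact: cholesky_unit 0 _ h1 h2.
    + exact: h0_sym.
  have n0 : n != 0%N by move: hk => /andP[hh _]; rewrite -lt0n.
  have [l0 r1 lm mr] := vfacts n k hk.
  by rewrite psi0 // ?r1 ?orbT // mulmx0 (negbTE n0) /= raddf0.
have p0 : p != 0%N by move: hq => /andP[hh _]; rewrite -lt0n.
have [l0 r1 lm mr] := vfacts p q hq.
case/orP: hk => [/andP[/eqP n0 /eqP k0]|hk].
  subst n k; rewrite eq_sym (negbTE p0) /= raddf0.
  rewrite (DeltaE p q _ (h0 F sG 0 (lp p q) *m L00 F sG (sigma 0%N 0%N))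
     (h0 F sG 0 (mp p q) *m L00 F sG (sigma 0%N 0%N))
     (h0 F sG 0 (rp p q) *m L00 F sG (sigma 0%N 0%N))) //.
  - exact: leftcase.
  - by rewrite /psi /= /psi_00 mulmxA.
  - by rewrite /psi /= /psi_00 mulmxA.
  - by rewrite /psi /= /psi_00 mulmxA.
have [enk|ne] := boolP ((n == p) && (k == q)).
  by case/andP: enk => /eqP <- /eqP <-; rewrite selfcase.
rewrite /= raddf0.
have ne' : (n != p) || (k != q) by rewrite -negb_and.
have [l0' r1' lm' mr'] := vfacts n k hk.
case: (classify Hn Ho' hk hq ne') => [[h1 h2]|[h1 h2]|[h1 h2 h3]].
- rewrite (DeltaE p q _ (h0 F sG (lp n k) (lp p q) *m (Lt n k)^T)
     (h0 F sG (lp n k) (mp p q) *m (Lt n k)^T)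
     (h0 F sG (lp n k) (rp p q) *m (Lt n k)^T)) //.
  + exact: leftcase.
  + by rewrite psiL // (le_trans (ltW lm) (le_trans (ltW mr) h2)).
  + rewrite psiL //; first exact: le_trans h1 (ltW lm).
    exact: le_trans (ltW mr) h2.
  + by rewrite psiL // (le_trans h1 (ltW (lt_trans lm mr))).
- rewrite (DeltaE p q _ (h0 F sG (lp p q) (rp n k) *m (Rt n k)^T)
     (h0 F sG (mp p q) (rp n k) *m (Rt n k)^T)
     (h0 F sG (rp p q) (rp n k) *m (Rt n k)^T)) //.
  + exact: rightcase.
  + by rewrite psiR // (le_trans (ltW lm) (le_trans (ltW mr) h2)).
  + rewrite psiR //; first exact: le_trans h1 (ltW lm).
    exact: le_trans (ltW mr) h2.
  + by rewrite psiR // (le_trans h1 (ltW (lt_trans lm mr))).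
- rewrite (DeltaE p q _ 0 0 0) //.
  + by rewrite !mulmx0 !subr0.
  + by rewrite mulmx0 psi0 //; case: h1 => ->; rewrite ?orbT.
  + by rewrite mulmx0 psi0 //; case: h2 => ->; rewrite ?orbT.
  + by rewrite mulmx0 psi0 //; case: h3 => ->; rewrite ?orbT.
Qed.

End Main.

Unset Implicit Arguments.

Theorem proposition5 (R : realType) (d mm : nat)
  (alpha : R -> 'M[R]_d) (sG : R -> 'M[R]_(d, mm)) (F : R -> R -> 'M[R]_d)
  (sigma : nat -> nat -> 'M[R]_d) (rho : R) (lp mp rp : nat -> nat -> R) :
  (0 < d)%N -> (0 < mm)%N ->
  (* continuity of alpha and sqrt Gamma on [0,1] *)
  (forall i j, {within `[0, 1], continuous (fun t => alpha t i j)}) ->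
  (forall i j, {within `[0, 1], continuous (fun t => sG t i j)}) ->
  (* F is the flow: F(s,s) = I, t |-> F(s,t) continuous on [0,1] and
     d/dt F(s,t) = alpha(t) F(s,t) on ]0,1[, for s in [0,1] *)
  (forall s : R, s \in `[0, 1] -> F s s = 1%:M) ->
  (forall s : R, s \in `[0, 1] -> forall i j,
      {within `[0, 1], continuous (fun t => F s t i j)}) ->
  (forall s : R, s \in `[0, 1] -> forall t : R, t \in `]0, 1[ -> forall i j,
      is_derive t 1 (fun u => F s u i j) ((alpha t *m F s t) i j)) ->
  (* non-degeneracy *)
  (forall u v : R, 0 <= u -> u < v -> v <= 1 ->
      posdef (F u v *m hu F sG u u v *m (F u v)^T)) ->
  (* partition *)
  0 < rho < 1 ->
  lp 1%N 0%N = 0 -> rp 1%N 0%N = 1 ->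
  (forall n k, (0 < n)%N -> (k < 2 ^ n.-1)%N ->
     [/\ lp n.+1 k.*2 = lp n k, rp n.+1 k.*2 = mp n k,
         lp n.+1 k.*2.+1 = mp n k & rp n.+1 k.*2.+1 = rp n k]) ->
  (forall n k, (0 < n)%N -> (k < 2 ^ n.-1)%N ->
     [/\ lp n k < mp n k, mp n k < rp n k &
         Num.max (rp n k - mp n k) (mp n k - lp n k) < rho * (rp n k - lp n k)]) ->
  (* Cholesky factors *)
  is_cholesky (gfl F 1 *m h0 F sG 0 1 *m (gfl F 1)^T) (sigma 0%N 0%N) ->
  (forall n k, (0 < n)%N -> (k < 2 ^ n.-1)%N ->
     is_cholesky (Sigma F sG (lp n k) (mp n k) (rp n k)) (sigma n k)) ->
  forall n k p q, inI n k -> inI p q ->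
    Delta F sG sigma lp mp rp p q (psi F sG sigma lp mp rp n k) =
    (if (n == p) && (k == q) then 1 else 0)%:M.
Proof.
move=> d0 mm0 Hal HsG Fss Fc Fd Hpd rho01 H10 H11 Hn Ho Hc0 Hc n k p q hk hq.
exact: (main_thm R d mm alpha sG F sigma rho lp mp rp HsG Fss Fc Fd Hpd H10 H11 Hn Ho Hc0 Hc n k p q hk hq).
Qed.
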